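(* Let $K=\mathbb{Q}(\sqrt{-\Delta})$ be an imaginary quadratic field, $r\ge 1$, and let $(L,H_L,\alpha)$ be a triple where $L$ is a $K$-vector space of dimension $r$, $H_L$ is a $K$-valued Hermitian form on $L$ for which there exists a $K$-basis of $L$ in which its matrix is $\mathrm{diag}(1,-1,\dots,-1)$ (signature $(1,r-1)$), and $\alpha:L\otimes_K\mathbb{C}\to\mathbb{C}$ is a surjective $\mathbb{C}$-linear map such that the restriction of $-H_{L,\mathbb{C}}$ to $\ker\alpha$ is positive definite. Let $1\le k\le r$, let $W_k$ be the cokernel of the inclusion $\lambda^k(\ker\alpha)\hookrightarrow\lambda^k(L)\otimes_K\mathbb{C}$ induced by $\ker\alpha\hookrightarrow L\otimes_K\mathbb{C}$, and let $\alpha_k:\lambda^k(L)\otimes_K\mathbb{C}\to W_k$ be the quotient map. Then $W_k$ has dimension $\binom{r-1}{k-1}$, the Hermitian form $H'=(-1)^{k-1}\lambda^k(H_L)$ on $\lambda^k(L)$ has a $K$-basis in which its matrix is $\begin{pmatrix}E_{a}&0\\0&-E_{b}\end{pmatrix}$ with $(a,b)=\left(\binom{r-1}{k-1},\binom{r-1}{k}\right)$, and the restriction of $-H'_{\mathbb{C}}$ to $\ker\alpha_k=\lambda^k(\ker\alpha)$ is positive definite. In other words, $(\lambda^k(L),(-1)^{k-1}\lambda^k(H_L),\alpha_k)$ is again a triple of the same type, of rank $\binom{r}{k}$ and signature $\left(\binom{r-1}{k-1},\binom{r-1}{k}\right)$ (and so defines, up to isogeny, an abelian variety with multiplication by $K$,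 the $k$-th exterior power of the one attached to $(L,H_L,\alpha)$).
   Context: $H_{L,\mathbb{C}}$ denotes the extension of $H_L$ to a Hermitian form on $L\otimes_K\mathbb{C}$ (similarly $H'_{\mathbb{C}}$). The exterior power of a Hermitian form is defined by $\lambda^k(H_L)(l_1\wedge\dots\wedge l_k,\,l'_1\wedge\dots\wedge l'_k)=\det\{H_L(l_i,l'_j)\}_{i,j}$. $E_m$ is the $m\times m$ identity matrix. *)

(* Defs.v *)
(* complex numbers are modeled as R[i] for R : realType. *)
From HB Require Import structures.
From mathcomp Require Import all_boot all_order all_algebra.
From mathcomp Require Import reals.
From mathcomp Require Import complex.
Set Implicit Arguments. Unset Strict Implicit. Unset Printing Implicit Defensive.
Import Order.TTheory GRing.Theory Num.Theory.
Local Open Scope ring_scope.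

Definition inK (C : numClosedFieldType) (Delta : nat) (x : C) : Prop :=
  exists p q : rat, x = ratr p + ratr q * sqrtC (- (Delta%:R)).

Definition mxK (C : numClosedFieldType) (Delta : nat) m n (M : 'M[C]_(m, n)) : Prop :=
  forall i j, inK Delta (M i j).

Definition adjmx (C : numClosedFieldType) m n (M : 'M[C]_(m, n)) : 'M[C]_(n, m) :=
  map_mx Num.conj (M^T).

(* k-element subsets of 'I_n: index set of the standard basis e_S of lambda^k *)
Definition ksub (n k : nat) := {S : {set 'I_n} | #|S| == k}.

(* increasing enumeration s_1 < ... < s_k of a k-subset S *)
Definition ksub_enum n k (S : ksub n k) : 'I_k -> 'I_n :=
  fun i => enum_val (cast_ord (esym (eqP (valP S))) i).

(* Rows of (compound M k) are the coordinates, in the basis e_T, of the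
   wedges of k rows of M; for a Gram matrix G of H, compound G k is the
   Gram matrix of lambda^k(H) in the basis e_S. *)
Definition compound (R : comNzRingType) m n (M : 'M[R]_(m, n)) (k : nat)
  : 'M[R]_(#|{: ksub m k}|, #|{: ksub n k}|) :=
  \matrix_(i, j) \det (mxsub (@ksub_enum m k (enum_val i))
                             (@ksub_enum n k (enum_val j)) M).

Definition sigmx (R : pzRingType) (n a : nat) : 'M[R]_n :=
  diag_mx (\row_(i < n) (if (i < a)%N then 1 else -1)).

(* a K-valued Hermitian form (Gram matrix G) admits a K-basis (rows of P)
   in which its matrix is diag(E_a, -E_(n-a)) *)
Definition has_sig (C : numClosedFieldType) (Delta : nat) n (G : 'M[C]_n) (a : nat) : Prop :=
  exists P : 'M[C]_n, [/\ mxK Delta P, P \in unitmx & P *m G *m adjmx P = sigmx C n a].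

Definition negdef_on (C : numClosedFieldType) n m (G : 'M[C]_n) (B : 'M[C]_(m, n)) : Prop :=
  forall w : 'rV[C]_n, (w <= B)%MS -> w != 0 -> 0 < - (w *m G *m adjmx w) 0 0.

(* Main.v *)
Require Import Defs.
From HB Require Import structures.
From mathcomp Require Import all_boot all_order all_algebra.
From mathcomp Require Import reals complex fingroup perm.
Set Implicit Arguments. Unset Strict Implicit. Unset Printing Implicit Defensive.
Import Order.TTheory GRing.Theory Num.Theory.
Local Open Scope ring_scope.

Lemma ksub_enum_inj n k (S : ksub n k) : injective (ksub_enum S).
Proof. by move=> i j /enum_val_inj /cast_ord_inj. Qed.

Lemma ksub_enumP n k (S : ksub n k) i : ksub_enum S i \in val S.
Proof. exact: enum_valP. Qed.

Lemma ksub_enum_surj n k (S : ksub n k) x : x \in val S -> exists i, ksub_enum S i = x.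
Proof.
move=> xS; exists (cast_ord (eqP (valP S)) (enum_rank_in xS x)).
by rewrite /ksub_enum cast_ordK enum_rankK_in.
Qed.

Lemma det_rowsub_perm (R : comNzRingType) p k (f : 'I_k -> 'I_p) (s : 'S_k) (Y : 'M[R]_(p,k)) :
  \det (rowsub (f \o s) Y) = (-1) ^+ s * \det (rowsub f Y).
Proof.
have -> : rowsub (f \o s) Y = perm_mx s *m rowsub f Y.
  by rewrite -row_permE; apply/matrixP => i j; rewrite !mxE.
by rewrite det_mulmx det_perm.
Qed.

Lemma cb_step1 (R : comNzRingType) p k (X : 'M[R]_(k,p)) (Y : 'M[R]_(p,k)) :
  \det (X *m Y) = \sum_(f : {ffun 'I_k -> 'I_p}) (\prod_i X i (f i)) * \det (rowsub f Y).
Proof.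
rewrite /(\det _).
transitivity (\sum_(s : 'S_k) \sum_(f : {ffun 'I_k -> 'I_p})
   (-1) ^+ s * ((\prod_i X i (f i)) * \prod_i Y (f i) (s i))).
  apply: eq_bigr => s _; rewrite -big_distrr /=; congr (_ * _).
  transitivity (\sum_(f : {ffun 'I_k -> 'I_p}) \prod_i (X i (f i) * Y (f i) (s i))); last first.
    by apply: eq_bigr => f _; rewrite big_split.
  rewrite -(bigA_distr_bigA (fun i j => X i j * Y j (s i))) /=.
  by apply: eq_bigr => i _; rewrite mxE.
rewrite exchange_big; apply: eq_bigr => f _ /=.
rewrite big_distrr /=; apply: eq_bigr => s _.
rewrite mulrCA; congr (_ * (_ * _)).
by apply: eq_bigr => i _; rewrite mxE.
Qed.

Definition cbh p k (x : ksub p k * 'S_k) : {ffun 'I_k -> 'I_p} :=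
  [ffun i => ksub_enum x.1 (x.2 i)].

Lemma cbh_sub p k (T T' : ksub p k) (s s' : 'S_k) :
  (forall i, ksub_enum T (s i) = ksub_enum T' (s' i)) -> val T \subset val T'.
Proof.
move=> E; apply/subsetP => x /ksub_enum_surj [i <-].
by rewrite -(permKV s i) E ksub_enumP.
Qed.

Lemma cbh_inj p k : injective (@cbh p k).
Proof.
move=> [T s] [T' s'] /= /ffunP E.
have E' i : ksub_enum T (s i) = ksub_enum T' (s' i) by move: (E i); rewrite !ffunE.
have ET : T = T'.
  apply: val_inj; apply/eqP; rewrite eqEcard (cbh_sub E') /=.
  by rewrite (eqP (valP T)) (eqP (valP T')).
subst T'; congr (_, _); apply/permP => i; apply: (@ksub_enum_inj _ _ T).
exact: E'.
Qed.

Lemma card_ksub p k : #|{: ksub p k}| = 'C(p, k).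
Proof.
rewrite card_sig -[p in 'C(p, _)]card_ord -card_draws.
by apply: eq_card => A; rewrite !inE.
Qed.

Lemma cbh_img p k : [set f : {ffun 'I_k -> 'I_p} | injectiveb f] = (@cbh p k) @: setT.
Proof.
apply/eqP; rewrite eq_sym eqEcard; apply/andP; split.
  apply/subsetP => _ /imsetP [x _ ->]; rewrite inE; apply/injectiveP => i j.
  by rewrite !ffunE => /ksub_enum_inj /perm_inj.
rewrite card_imset; last exact: cbh_inj.
rewrite card_inj_ffuns cardsT card_prod card_ksub perm.card_Sn !card_ord.
by rewrite bin_ffact.
Qed.

Lemma cauchy_binet (R : comNzRingType) p k (X : 'M[R]_(k,p)) (Y : 'M[R]_(p,k)) :
  \det (X *m Y) = \sum_(T : ksub p k)
     \det (colsub (ksub_enum T) X) * \det (rowsub (ksub_enum T) Y).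
Proof.
rewrite cb_step1 (bigID (fun f : {ffun 'I_k -> 'I_p} => injectiveb f)) /=.
rewrite [X in _ + X]big1 ?addr0; last first.
  move=> f /injectivePn [i1 [i2 Di12 Ef]].
  by rewrite (determinant_alternate Di12) ?mulr0 // => j; rewrite !mxE Ef.
rewrite (eq_bigl (fun f => f \in [set f : {ffun 'I_k -> 'I_p} | injectiveb f]));
  last by move=> f; rewrite inE.
rewrite cbh_img big_imset /=; last by move=> x y _ _; apply: cbh_inj.
rewrite (eq_bigl xpredT); last by move=> x; rewrite inE.
rewrite -(pair_big xpredT xpredT (fun T s =>
   (\prod_i X i (cbh (T, s) i)) * \det (rowsub (cbh (T, s)) Y))) /=.
apply: eq_bigr => T _.
have E : forall s : 'S_k, rowsub (cbh (T, s)) Y = rowsub (ksub_enum T \o s) Y.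
  by move=> s; apply/matrixP => i j; rewrite !mxE ffunE.
under eq_bigr => s _ do rewrite E det_rowsub_perm.
rewrite [X in _ = X * _]/(\det _) big_distrl /=.
apply: eq_big => [//|s _].
rewrite mulrCA mulrA; congr (_ * _ * _).
by apply: eq_bigr => i _; rewrite !mxE ffunE.
Qed.

Lemma compoundM (R : comNzRingType) m p q (A : 'M[R]_(m,p)) (B : 'M[R]_(p,q)) k :
  compound (A *m B) k = compound A k *m compound B k.
Proof.
apply/matrixP => i j; rewrite !mxE mxsub_mul cauchy_binet.
rewrite (reindex (@enum_val _ {: ksub p k})) /=; last first.
  by exists enum_rank => x _; rewrite ?enum_valK ?enum_rankK.
apply: eq_bigr => l _; rewrite !mxE.
by congr (_ * _); congr (\det _); apply/matrixP => x y; rewrite !mxE.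
Qed.

Lemma det_row0 (R : comNzRingType) n (A : 'M[R]_n) i0 : (forall j, A i0 j = 0) -> \det A = 0.
Proof.
by move=> H; rewrite (expand_det_row _ i0) big1 // => j _; rewrite H mul0r.
Qed.

Lemma compound_diag (R : comNzRingType) n (d : 'rV[R]_n) k :
  compound (diag_mx d) k =
  diag_mx (\row_i \prod_(j < k) d 0 (ksub_enum (enum_val i) j)).
Proof.
apply/matrixP => i j; rewrite !mxE; case: (eqVneq i j) => [<-|ne].
  rewrite mulr1n.
  set e := ksub_enum _.
  have -> : mxsub e e (diag_mx d) = diag_mx (\row_j d 0 (e j)).
    apply/matrixP => x y; rewrite !mxE (inj_eq (@ksub_enum_inj _ _ _)) //.
  by rewrite det_diag; apply: eq_bigr => x _; rewrite mxE.
rewrite mulr0n.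
set S := enum_val i; set T := enum_val j.
have nST : ~~ (val S \subset val T).
  apply: contra ne => sST.
  have ST : S = T.
    apply: val_inj; apply/eqP; rewrite eqEcard sST /=.
    by rewrite (eqP (valP S)) (eqP (valP T)).
  by apply/eqP; apply: enum_val_inj.
case/subsetPn: nST => x /ksub_enum_surj [i0 <-] xT.
apply: (det_row0 (i0 := i0)) => y; rewrite !mxE.
case: eqP => [E|]; last by rewrite mulr0n.
by move: xT; rewrite E ksub_enumP.
Qed.

Lemma compound_tr (R : comNzRingType) m n (M : 'M[R]_(m, n)) k :
  compound (M^T) k = (compound M k)^T.
Proof. by apply/matrixP => i j; rewrite !mxE -trmx_mxsub det_tr. Qed.

Lemma compound_map (R S : comNzRingType) (f : {rmorphism R -> S}) m n (M : 'M[R]_(m, n)) k :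
  compound (map_mx f M) k = map_mx f (compound M k).
Proof. by apply/matrixP => i j; rewrite !mxE -map_mxsub det_map_mx. Qed.

Lemma compound_scale (R : comNzRingType) m n (c : R) (M : 'M[R]_(m, n)) k :
  compound (c *: M) k = c ^+ k *: compound M k.
Proof.
apply/matrixP => i j; rewrite !mxE -detZ; congr (\det _).
by apply/matrixP => x y; rewrite !mxE.
Qed.

Lemma compound_adj (C : numClosedFieldType) m n (M : 'M[C]_(m, n)) k :
  compound (adjmx M) k = adjmx (compound M k).
Proof. by rewrite /adjmx (compound_map Num.conj) compound_tr. Qed.

Lemma compound1 (R : comNzRingType) n k :
  compound (1%:M : 'M[R]_n) k = 1%:M.
Proof.
rewrite -diag_const_mx compound_diag -diag_const_mx; congr diag_mx.
by apply/rowP => i; rewrite !mxE big1 // => j _; rewrite mxE.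
Qed.

From mathcomp Require Import ring.

Lemma inK0 (C : numClosedFieldType) D : inK D (0 : C).
Proof. by exists 0, 0; rewrite !rmorph0 mul0r addr0. Qed.

Lemma inK1 (C : numClosedFieldType) D : inK D (1 : C).
Proof. by exists 1, 0; rewrite rmorph1 rmorph0 mul0r addr0. Qed.

Lemma inKD (C : numClosedFieldType) D (x y : C) : inK D x -> inK D y -> inK D (x + y).
Proof.
move=> [p [q ->]] [p' [q' ->]]; exists (p + p'), (q + q').
rewrite !rmorphD /=; ring.
Qed.

Lemma inKN (C : numClosedFieldType) D (x : C) : inK D x -> inK D (- x).
Proof.
move=> [p [q ->]]; exists (- p), (- q); rewrite !rmorphN /=; ring.
Qed.

Lemma inKM (C : numClosedFieldType) D (x y : C) : inK D x -> inK D y -> inK D (x * y).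
Proof.
move=> [p [q ->]] [p' [q' ->]].
exists (p * p' - D%:R * q * q'), (p * q' + q * p').
set s := sqrtC _.
have hs : s * s = - D%:R by rewrite -expr2 sqrtCK.
rewrite !(rmorphD, rmorphM, rmorphN) /= ratr_nat.
transitivity (ratr p * ratr p' + ratr q * ratr q' * (s * s) +
   (ratr p * ratr q' + ratr q * ratr p') * s :> C); first by ring.
rewrite hs; ring.
Qed.

Lemma inKX (C : numClosedFieldType) D (x : C) n : inK D x -> inK D (x ^+ n).
Proof.
move=> Hx; elim: n => [|n IH]; first by rewrite expr0; apply: inK1.
by rewrite exprS; apply: inKM.
Qed.

Lemma inK_sum (C : numClosedFieldType) D (I : finType) (P : pred I) (F : I -> C) :
  (forall i, P i -> inK D (F i)) -> inK D (\sum_(i | P i) F i).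
Proof. by move=> H; apply: big_ind => //; [apply: inK0 | apply: inKD]. Qed.

Lemma inK_prod (C : numClosedFieldType) D (I : finType) (P : pred I) (F : I -> C) :
  (forall i, P i -> inK D (F i)) -> inK D (\prod_(i | P i) F i).
Proof. by move=> H; apply: big_ind => //; [apply: inK1 | apply: inKM]. Qed.

Lemma mxK_det (C : numClosedFieldType) D n (A : 'M[C]_n) : mxK D A -> inK D (\det A).
Proof.
move=> HA; apply: inK_sum => s _; apply: inKM.
  by apply: inKX; apply: inKN; apply: inK1.
by apply: inK_prod => i _; apply: HA.
Qed.

Lemma mxK_mul (C : numClosedFieldType) D m n p (A : 'M[C]_(m,n)) (B : 'M[C]_(n,p)) :
  mxK D A -> mxK D B -> mxK D (A *m B).
Proof.
by move=> HA HB i j; rewrite mxE; apply: inK_sum => l _; apply: inKM.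
Qed.

Lemma mxK_compound (C : numClosedFieldType) D m n (A : 'M[C]_(m,n)) k :
  mxK D A -> mxK D (compound A k).
Proof. by move=> HA i j; rewrite mxE; apply: mxK_det => x y; rewrite mxE. Qed.

Definition cnt n (X : {set 'I_n}) (i : 'I_n) := #|[set j in X | (j < i)%N]|.

Lemma cnt_lt n (X : {set 'I_n}) i : i \in X -> (cnt X i < #|X|)%N.
Proof.
move=> iX; apply: proper_card; apply/properP; split.
  by apply/subsetP => j; rewrite inE => /andP[].
by exists i => //; rewrite inE ltnn andbF.
Qed.

Lemma cnt_mono n (X : {set 'I_n}) (i j : 'I_n) : i \in X -> (i < j)%N -> (cnt X i < cnt X j)%N.
Proof.
move=> iX lij; apply: proper_card; apply/properP; split.
  apply/subsetP => x; rewrite !inE => /andP[-> lxi] /=; exact: ltn_trans lxi lij.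
by exists i; rewrite !inE ?iX ?lij // ltnn andbF.
Qed.

Lemma cnt_inj n (X : {set 'I_n}) i j : i \in X -> j \in X -> cnt X i = cnt X j -> i = j.
Proof.
move=> iX jX E; apply: val_inj; case: (ltngtP i j) => // [lij|lji].
  by have := cnt_mono iX lij; rewrite E ltnn.
by have := cnt_mono jX lji; rewrite E ltnn.
Qed.

Definition gpos n (X : {set 'I_n}) (i : 'I_n) : nat :=
  if i \in X then cnt X i else (#|X| + cnt (~: X) i)%N.

Lemma gpos_lt n (X : {set 'I_n}) i : (gpos X i < n)%N.
Proof.
rewrite /gpos; case: ifP => iX.
  by apply: leq_trans (cnt_lt iX) _; have := max_card (mem X); rewrite card_ord.
have iC : i \in ~: X by rewrite inE iX.
have E := cardsC X; rewrite card_ord in E.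
by rewrite -[n in (_ < n)%N]E ltn_add2l; exact: cnt_lt.
Qed.

Lemma gpos_inj n (X : {set 'I_n}) : injective (fun i => Ordinal (gpos_lt X i)).
Proof.
move=> i j /(congr1 val) /=; rewrite /gpos.
case: ifP => iX; case: ifP => jX.
- exact: cnt_inj.
- move=> E; have := cnt_lt iX; rewrite E; by rewrite ltnNge leq_addr.
- move=> E; have := cnt_lt jX; rewrite -E; by rewrite ltnNge leq_addr.
- move/addnI; apply: cnt_inj; by rewrite inE ?iX ?jX.
Qed.

Lemma gpos_lt_card n (X : {set 'I_n}) i : ((gpos X i < #|X|)%N = (i \in X)).
Proof.
rewrite /gpos; case: ifP => iX; first by rewrite cnt_lt.
by rewrite ltnNge leq_addr.
Qed.

Lemma perm_mx_adj (C : numClosedFieldType) n (t : 'S_n) :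
  adjmx (perm_mx t : 'M[C]_n) = perm_mx (t^-1)%g.
Proof.
rewrite /adjmx tr_perm_mx; apply/matrixP => i j; rewrite !mxE.
by case: eqP; rewrite ?rmorph1 ?rmorph0.
Qed.

Lemma mxK_perm (C : numClosedFieldType) D n (t : 'S_n) : mxK D (perm_mx t : 'M[C]_n).
Proof. by move=> i j; rewrite !mxE; case: eqP => _; [apply: inK1 | apply: inK0]. Qed.

Lemma sign_reorder (C : numClosedFieldType) D n (d : 'I_n -> C) :
  (forall i, d i = 1 \/ d i = -1) -> (1 : C) != -1 ->
  exists Q : 'M[C]_n, [/\ mxK D Q, Q \in unitmx &
     Q *m diag_mx (\row_i d i) *m adjmx Q = sigmx C n #|[set i | d i == 1]|].
Proof.
move=> Hd n1; set X := [set i | d i == 1].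
set s := perm (@gpos_inj _ X); set t := (s^-1)%g.
exists (perm_mx t); split; [exact: mxK_perm | exact: unitmx_perm |].
rewrite perm_mx_adj -col_permE -row_permE.
apply/matrixP => x y; rewrite !mxE (inj_eq perm_inj).
case: eqP => [_|_]; rewrite ?mulr0n ?mulr1n //.
have Hx : x = Ordinal (gpos_lt X (t x)).
  by rewrite -(permE (@gpos_inj _ X)) -/s /t permKV.
rewrite {2}Hx /= gpos_lt_card inE.
by case: eqP => // /eqP; case: (Hd (t x)) => ->; rewrite ?eqxx.
Qed.

From mathcomp Require Import sesquilinear spectral.
Local Open Scope sesquilinear_scope.

Lemma adjmx_mul (C : numClosedFieldType) m n p (A : 'M[C]_(m,n)) (B : 'M[C]_(n,p)) :
  adjmx (A *m B) = adjmx B *m adjmx A.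
Proof. by rewrite /adjmx trmx_mul map_mxM. Qed.

Lemma adjmxK (C : numClosedFieldType) m n (A : 'M[C]_(m,n)) : adjmx (adjmx A) = A.
Proof. by apply/matrixP => i j; rewrite !mxE conjCK. Qed.

Lemma adjmxN (C : numClosedFieldType) m n (A : 'M[C]_(m,n)) : adjmx (- A) = - adjmx A.
Proof. by apply/matrixP => i j; rewrite !mxE rmorphN. Qed.

Lemma adjmxZ (C : numClosedFieldType) m n c (A : 'M[C]_(m,n)) :
  adjmx (c *: A) = c^* *: adjmx A.
Proof. by apply/matrixP => i j; rewrite !mxE rmorphM. Qed.

Lemma quad_row (C : numClosedFieldType) m n (A : 'M[C]_(m, n)) (M : 'M[C]_n) i :
  (row i A *m M *m adjmx (row i A)) 0 0 = (A *m M *m adjmx A) i i.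
Proof.
rewrite !mxE; apply: eq_bigr => j _; rewrite !mxE; congr (_ * _).
by apply: eq_bigr => l _; rewrite !mxE.
Qed.

Lemma diag_basis (C : numClosedFieldType) r m (G : 'M[C]_r) (B0 : 'M[C]_(m, r)) :
  adjmx G = G -> row_free B0 -> negdef_on G B0 ->
  exists B : 'M[C]_(m, r), exists d : 'rV[C]_m,
    [/\ (B :=: B0)%MS, B *m (- G) *m adjmx B = diag_mx d & forall i, 0 < d 0 i].
Proof.
move=> hG fB0 ndG.
set S := B0 *m (- G) *m adjmx B0.
have hS : adjmx S = S by rewrite /S !adjmx_mul adjmxK adjmxN hG mulmxA.
have nS : S \is normalmx.
  apply/normalmxP; rewrite -[S ^t* ]/(adjmx S) hS //.
set V := spectralmx S; set d := spectral_diag S.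
have uV : V \is unitarymx by exact: spectral_unitarymx.
have VV : V *m adjmx V = 1%:M by apply/unitarymxP.
have eS : S = adjmx V *m diag_mx d *m V.
  by rewrite -[adjmx V]/(V ^t* ) -invmx_unitary //; apply/orthomx_spectralP.
exists (V *m B0), d.
have eB : (V *m B0 :=: B0)%MS.
  by apply: eqmxMfull; rewrite row_full_unit unitarymx_unit.
have eD : V *m B0 *m - G *m adjmx (V *m B0) = diag_mx d.
  rewrite adjmx_mul.
  have -> : V *m B0 *m - G *m (adjmx B0 *m adjmx V) = V *m S *m adjmx V.
    by rewrite /S !mulmxA.
  by rewrite eS !mulmxA VV mul1mx -mulmxA VV mulmx1.
split => // i.
have <- : (V *m B0 *m - G *m adjmx (V *m B0)) i i = d 0 i.
  by rewrite eD mxE eqxx mulr1n.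
rewrite -quad_row mulmxN mulNmx mxE; apply: ndG.
  by rewrite -eB row_sub.
apply: contraTneq fB0 => r0; apply/negP => fB.
move: r0; rewrite row_mul => /eqP; rewrite mulmx_free_eq0 // => /eqP rV0.
have := quad_row V 1%:M i; rewrite rV0 !mul0mx mulmx1 VV !mxE eqxx /=.
by move/eqP; rewrite eq_sym oner_eq0.
Qed.

Lemma quad_diag_pos (C : numClosedFieldType) n (d : 'rV[C]_n) (x : 'rV[C]_n) :
  (forall i, 0 < d 0 i) -> x != 0 -> 0 < (x *m diag_mx d *m adjmx x) 0 0.
Proof.
move=> dpos x0.
have : [exists j, x 0 j != 0].
  apply: contraNT x0 => /existsPn H; apply/eqP/rowP => j.
  by rewrite mxE; apply/eqP; have := H j; rewrite negbK.
case/existsP => j xj.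
have term i : x 0 i * d 0 i * (x 0 i)^* = d 0 i * `|x 0 i| ^+ 2.
  by rewrite normCK mulrAC mulrC.
rewrite mul_mx_diag mxE (bigD1 j) //= !mxE term.
apply: ltr_pwDl.
  by apply: mulr_gt0; [exact: dpos | rewrite exprn_gt0 // normr_gt0].
rewrite sumr_ge0 // => i _; rewrite !mxE term.
by apply: mulr_ge0; [exact: ltW | exact: exprn_ge0].
Qed.

Lemma prod_ksub (R : comNzRingType) n k (S : ksub n k) (F : 'I_n -> R) :
  \prod_(j < k) F (ksub_enum S j) = \prod_(x in val S) F x.
Proof.
have -> : val S = ksub_enum S @: setT.
  apply/setP => x; apply/idP/imsetP => [/ksub_enum_surj [i <-]|[i _ ->]].
    by exists i.
  exact: ksub_enumP.
rewrite big_imset /=; last by move=> i j _ _; apply: ksub_enum_inj.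
by apply: eq_bigl => j; rewrite inE.
Qed.

Lemma count_ksub0 r k :
  #|[set S : ksub r.+1 k | ord0 \in val S]| = ('C(r.+1, k) - 'C(r, k))%N.
Proof.
have h1 : #|[set S : ksub r.+1 k | ord0 \notin val S]| = 'C(r, k).
  rewrite -(card_imset _ val_inj).
  have -> : 'C(r, k) = 'C(#|[set~ (ord0 : 'I_r.+1)]|, k) by rewrite cardsC1 card_ord.
  rewrite -cards_draws; apply: eq_card => A.
  apply/imsetP/idP => [[S H ->]|].
    rewrite inE in H; rewrite inE (valP S) andbT.
    apply/subsetP => x xS; rewrite !inE; apply: contraNneq H => <- //.
  rewrite inE => /andP[sub cA]; exists (exist _ A cA) => //; rewrite inE /=.
  by apply/negP => /(subsetP sub); rewrite !inE eqxx.
have := cardsC [set S : ksub r.+1 k | ord0 \in val S].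
rewrite (_ : ~: _ = [set S : ksub r.+1 k | ord0 \notin val S]); last first.
  by apply/setP => S; rewrite !inE.
move=> E; rewrite -(card_ksub r.+1 k) -[X in (X - _)%N]E h1 addnK //.
Qed.

Lemma sign_ksub (R : comNzRingType) r k (S : ksub r.+1 k.+1) :
  (-1) ^+ k * \prod_(j < k.+1) (if (ksub_enum S j < 1)%N then 1 else -1 : R) =
  if ord0 \in val S then 1 else -1.
Proof.
rewrite (prod_ksub S (fun x => if (x < 1)%N then 1 else -1 : R)).
case: ifP => S0.
  rewrite (bigD1 ord0) //= mul1r.
  rewrite (eq_bigr (fun _ => -1)); last first.
    move=> x /andP[_ x0]; rewrite ltnS leqn0.
    by case: eqP => // E; move: x0; rewrite (_ : x = ord0) ?eqxx //; apply: val_inj.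
  rewrite prodr_const.
  have -> : #|[pred x in val S | x != ord0]| = k.
    have E := cardsD1 ord0 (val S); rewrite S0 (eqP (valP S)) add1n in E.
    case: E => E; transitivity #|val S :\ ord0|; last exact: esym E.
    by apply: eq_card => x; rewrite !inE andbC.
  by rewrite -exprD -signr_odd oddD addbb.
rewrite (eq_bigr (fun _ => -1)); last first.
  move=> x xS; rewrite ltnS leqn0.
  by case: eqP => // E; move: S0; rewrite (_ : ord0 = x) ?xS //; apply: val_inj.
rewrite prodr_const (eqP (valP S)) exprS mulrCA -exprD -signr_odd oddD addbb.
by rewrite mulr1.
Qed.

Lemma sign_ne (C : numClosedFieldType) : (1 : C) != -1.
Proof. by rewrite -addr_eq0 -(natrD C 1 1) pnatr_eq0. Qed.

Unset Implicit Arguments.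
Local Close Scope sesquilinear_scope.

Theorem mainTheorem2 (R : realType) (Delta : nat) (r k : nat)
  (G : 'M[R[i]]_r) (a : 'cV[R[i]]_r) :
  (0 < Delta)%N -> (1 <= r)%N ->
  mxK Delta G -> adjmx G = G ->
  has_sig Delta G 1 ->
  a != 0 ->
  negdef_on G (kermx a) ->
  (1 <= k <= r)%N ->
  let n := #|{: ksub r k}| in
  let H' := (-1) ^+ k.-1 *: compound G k in
  let Lk_ker := compound (kermx a) k in
  [/\ (n - \rank Lk_ker)%N = 'C(r.-1, k.-1),
      n = 'C(r, k) /\ n = ('C(r.-1, k.-1) + 'C(r.-1, k))%N,
      mxK Delta H' /\ adjmx H' = H',
      has_sig Delta H' 'C(r.-1, k.-1)
    & negdef_on H' Lk_ker].
Proof.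
move=> D0 r1 KG hG [P [KP uP eP]] a0 nd.
case: r G a P KG hG KP uP eP a0 nd r1 => [|r] G a P KG hG KP uP eP a0 nd r1 //.
case: k => [|k]; first by case/andP.
move=> kk n H' Lk /=.
have hn : n = 'C(r.+1, k.+1) by rewrite /n card_ksub.
have hH' : - H' = compound (- G) k.+1.
  by rewrite /H' -[- G]scaleN1r compound_scale -scaleNr exprS mulN1r.
have ndB0 : negdef_on G (row_base (kermx a)).
  by move=> w; rewrite eq_row_base; exact: nd.
have [B [d [eB eD dpos]]] := diag_basis hG (row_base_free _) ndB0.
set CB := compound B k.+1.
pose d' : 'rV[R[i]]_#|{: ksub (\rank (kermx a)) k.+1}| := \row_i \prod_(j < k.+1) d 0 (ksub_enum (enum_val i) j).
have eQ : CB *m compound (- G) k.+1 *m adjmx CB = diag_mx d'.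
  by rewrite /CB -compound_adj -!compoundM eD compound_diag.
have d'pos : forall i, 0 < d' 0 i.
  by move=> i; rewrite mxE; apply: prodr_gt0 => j _; apply: dpos.
have sLB : (Lk <= CB)%MS.
  have /submxP [Y eY] : (kermx a <= B)%MS by rewrite eB eq_row_base.
  by apply/submxP; exists (compound Y k.+1); rewrite /Lk /CB -compoundM -eY.
have sBL : (CB <= Lk)%MS.
  have /submxP [Z eZ] : (B <= kermx a)%MS by rewrite eB eq_row_base.
  by apply/submxP; exists (compound Z k.+1); rewrite /CB /Lk -compoundM -eZ.
have rCB : \rank CB = #|{: ksub (\rank (kermx a)) k.+1}|.
  apply/eqP; rewrite eqn_leq rank_leq_row /=.
  have ud : diag_mx d' \in unitmx.
    by rewrite unitmxE det_diag unitfE gt_eqF //; apply: prodr_gt0 => i _.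
  rewrite -{1}(mxrank_unit ud) -eQ.
  exact: leq_trans (mxrankM_maxl _ _) (mxrankM_maxl _ _).
have rk : \rank (kermx a) = r.
  rewrite mxrank_ker; have -> : \rank a = 1%N.
    by apply/eqP; rewrite eqn_leq rank_leq_col lt0n mxrank_eq0 a0.
  by rewrite subn1.
have rL : \rank Lk = 'C(r, k.+1).
  have -> : \rank Lk = \rank CB by apply/eqP; rewrite eqn_leq !mxrankS.
  by rewrite rCB card_ksub rk.
split.
- by rewrite rL hn binS addKn.
- by rewrite hn binS addnC.
- split.
    move=> x y; rewrite /H' mxE; apply: inKM.
      by apply: inKX; apply: inKN; apply: inK1.
    exact: mxK_compound.
  by rewrite /H' adjmxZ -compound_adj hG rmorphXn rmorphN1.
- set P1 := compound P k.+1.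
  set dl := fun i : 'I_#|{: ksub r.+1 k.+1}| =>
     (if ord0 \in val (enum_val i) then 1 else -1 : R[i]).
  have eP1 : P1 *m H' *m adjmx P1 = diag_mx (\row_i dl i).
    rewrite /H' -scalemxAr -scalemxAl /P1 -compound_adj -!compoundM eP.
    rewrite /sigmx compound_diag.
    apply/matrixP => i j; rewrite !mxE mulrnAr; congr (_ *+ _).
    under eq_bigr => l _ do rewrite mxE.
    exact: sign_ksub.
  have hdl : forall i, dl i = 1 \/ dl i = -1.
    by move=> i; rewrite /dl; case: ifP; [left | right].
  have [Q [KQ uQ eQ']] := sign_reorder Delta hdl (sign_ne _).
  have uP1 : P1 \in unitmx.
    have : P1 *m compound (invmx P) k.+1 = 1%:M.
      by rewrite /P1 -compoundM mulmxV // compound1.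
    by case/mulmx1_unit.
  exists (Q *m P1); split.
  + by apply: mxK_mul => //; exact: mxK_compound.
  + by rewrite unitmx_mul uQ uP1.
  rewrite adjmx_mul.
  have -> : Q *m P1 *m H' *m (adjmx P1 *m adjmx Q) =
            Q *m (P1 *m H' *m adjmx P1) *m adjmx Q by rewrite !mulmxA.
  rewrite eP1 eQ'; congr sigmx.
  have -> : [set i | dl i == 1] = [set i : 'I_#|{: ksub r.+1 k.+1}| | ord0 \in val (enum_val i)].
    apply/setP => i; rewrite !inE /dl; case: ifP.
    by rewrite eqxx.
    by move=> _; apply: negbTE; rewrite eq_sym sign_ne.
  rewrite -(card_imset _ (@enum_val_inj _ {: ksub r.+1 k.+1})).
  have -> : [set enum_val x | x in [set i : 'I_#|{: ksub r.+1 k.+1}| | ord0 \in val (enum_val i)]] =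
            [set S : ksub r.+1 k.+1 | ord0 \in val S].
    apply/setP => S; apply/imsetP/idP => [[i H ->]|H].
      by move: H; rewrite !inE.
    by exists (enum_rank S); rewrite ?inE enum_rankK //; move: H; rewrite inE.
  by rewrite count_ksub0 binS addKn.
- move=> w /submxP [x0 ->] w0.
  have /submxP [Y eY] := sLB.
  rewrite eY mulmxA in w0 *.
  set x := x0 *m Y in w0 *.
  have x0' : x != 0 by apply: contraNneq w0 => ->; rewrite mul0mx.
  have -> : forall M : 'M[R[i]]_1, - M 0 0 = (- M) 0 0 by move=> M; rewrite mxE.
  rewrite -mulNmx -mulmxN hH' adjmx_mul.
  have -> : x *m CB *m compound (- G) k.+1 *m (adjmx CB *m adjmx x) =
            x *m (CB *m compound (- G) k.+1 *m adjmx CB) *m adjmx x.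
    by rewrite !mulmxA.
  by rewrite eQ; exact: quad_diag_pos.
Qed.
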